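(* Let $(X,Y)$ be a bivariate random vector whose distribution is given by a joint pmf or a joint pdf (w.r.t. Lebesgue measure) $f$. Call $(X,Y)$ UR$_{\mathrm E}$ (resp. LR$_{\mathrm E}$) if $f(x,y)\ge f(-y,-x)$ whenever $|x|<y$ (resp. whenever $|y|<x$), and UR$^{\mathrm E}$ (resp. LR$^{\mathrm E}$) if $f(x,y)\le f(-y,-x)$ whenever $|x|<y$ (resp. whenever $|y|<x$). Then: (i) UR$_{\mathrm E}$ implies $|X|\le_{\mathrm{st}}|\max(X,Y)|$ and $|\min(X,Y)|\le_{\mathrm{st}}|Y|$; (ii) LR$_{\mathrm E}$ implies $|Y|\le_{\mathrm{st}}|\max(X,Y)|$ and $|\min(X,Y)|\le_{\mathrm{st}}|X|$; (iii) UR$^{\mathrm E}$ implies $|X|\ge_{\mathrm{st}}|\max(X,Y)|$ and $|\min(X,Y)|\ge_{\mathrm{st}}|Y|$; (iv) LR$^{\mathrm E}$ implies $|Y|\ge_{\mathrm{st}}|\max(X,Y)|$ and $|\min(X,Y)|\ge_{\mathrm{st}}|X|$. Under the hypothesis of (i) the stochastic inequalities in (i) are strict if and only if $\Pr[|X|<Y]>\Pr[X<-|Y|]$; under the hypothesis of (iii), those in (iii) are strict iff $\Pr[|X|<Y]<\Pr[X<-|Y|]$. Under the hypothesis of (ii), those in (ii) are strict iff $\Pr[|Y|<X]>\Pr[Y<-|X|]$; under the hypothesis of (iv), those in (iv) are strict iff $\Pr[|Y|<X]<\Pr[Y<-|X|]$.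
   Context: For random variables $U,V$, $U\le_{\mathrm{st}}V$ (equivalently $V\ge_{\mathrm{st}}U$) means $F_U(x)\ge F_V(x)$ for all real $x$, $F$ denoting the cdf; the inequality is strict if in addition $F_U(x)>F_V(x)$ for at least one $x$. *)

(* Defs.v *)
From HB Require Import structures.
From mathcomp Require Import all_boot all_order all_algebra.
From mathcomp Require Import all_classical all_reals all_analysis.
Set Implicit Arguments. Unset Strict Implicit. Unset Printing Implicit Defensive.
Import Order.TTheory GRing.Theory Num.Theory.
Import numFieldNormedType.Exports.
Local Open Scope classical_set_scope.
Local Open Scope ring_scope.

(* The joint law of (X,Y) is a probability measure mu on R x R;
   a point p : R * R stands for (X,Y) = (p.1, p.2). *)

Definition is_joint_pmf (R : realType) (mu : set (R * R) -> \bar R)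
  (f : R * R -> R) : Prop :=
  (forall p, 0 <= f p) /\
  (forall A : set (R * R), measurable A -> mu A = (\esum_(p in A) (f p)%:E)%E).

Definition is_joint_pdf (R : realType) (mu : set (R * R) -> \bar R)
  (f : R * R -> R) : Prop :=
  (forall p, 0 <= f p) /\ measurable_fun setT f /\
  (forall A : set (R * R), measurable A ->
     mu A = (\int[(@lebesgue_measure R) \x (@lebesgue_measure R)]_(p in A) (f p)%:E)%E).

Definition UR_E (R : realType) (f : R * R -> R) : Prop :=
  forall x y : R, `|x| < y -> f (- y, - x) <= f (x, y).
Definition LR_E (R : realType) (f : R * R -> R) : Prop :=
  forall x y : R, `|y| < x -> f (- y, - x) <= f (x, y).
Definition UR_E' (R : realType) (f : R * R -> R) : Prop :=
  forall x y : R, `|x| < y -> f (x, y) <= f (- y, - x).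
Definition LR_E' (R : realType) (f : R * R -> R) : Prop :=
  forall x y : R, `|y| < x -> f (x, y) <= f (- y, - x).

Definition cdf_of (R : realType) (mu : set (R * R) -> \bar R)
  (g : R * R -> R) (t : R) : \bar R := mu [set p | g p <= t].

Definition st_le (R : realType) (mu : set (R * R) -> \bar R)
  (g h : R * R -> R) : Prop :=
  forall t, (cdf_of mu h t <= cdf_of mu g t)%E.
Definition st_lt (R : realType) (mu : set (R * R) -> \bar R)
  (g h : R * R -> R) : Prop :=
  st_le mu g h /\ exists t, (cdf_of mu h t < cdf_of mu g t)%E.

Definition absX (R : realType) (p : R * R) : R := `|p.1|.
Definition absY (R : realType) (p : R * R) : R := `|p.2|.
Definition absmax (R : realType) (p : R * R) : R := `|Num.max p.1 p.2|.
Definition absmin (R : realType) (p : R * R) : R := `|Num.min p.1 p.2|.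

(* Main.v *)
Require Import Defs.
From HB Require Import structures.
From mathcomp Require Import all_boot all_order all_algebra.
From mathcomp Require Import all_classical all_reals all_analysis.
From mathcomp Require Import measurable_realfun.
From mathcomp Require Import lra.
Import Order.TTheory GRing.Theory Num.Theory.
Import numFieldNormedType.Exports.
Local Open Scope classical_set_scope.
Local Open Scope ring_scope.

Section S.
Context {R : realType}.
Notation T := (R * R)%type.

Lemma mset_le (g h : T -> R) : measurable_fun setT g -> measurable_fun setT h ->
  measurable [set p | g p <= h p].
Proof.
move=> mg mh.
have H : measurable_fun setT (fun p => g p <= h p) := measurable_fun_ler mg mh.
have -> : [set p | g p <= h p] = (fun p => g p <= h p) @^-1` [set true].
  by apply/seteqP; split => p /=.
by rewrite -[X in measurable X]setTI; apply: H.
Qed.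
Lemma mset_lt (g h : T -> R) : measurable_fun setT g -> measurable_fun setT h ->
  measurable [set p | g p < h p].
Proof.
move=> mg mh.
have H : measurable_fun setT (fun p => g p < h p) := measurable_fun_ltr mg mh.
have -> : [set p | g p < h p] = (fun p => g p < h p) @^-1` [set true].
  by apply/seteqP; split => p /=.
by rewrite -[X in measurable X]setTI; apply: H.
Qed.
Lemma m1 : measurable_fun setT (fun p : T => p.1). Proof. exact: measurable_fst. Qed.
Lemma m2 : measurable_fun setT (fun p : T => p.2). Proof. exact: measurable_snd. Qed.
Lemma mcst (c : R) : measurable_fun setT (fun _ : T => c). Proof. exact: measurable_cst. Qed.
Lemma mabs {g : T -> R} : measurable_fun setT g -> measurable_fun setT (fun p => `|g p|).
Proof. by move=> mg; apply: measurableT_comp => //; exact: normr_measurable. Qed.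
Lemma mopp {g : T -> R} : measurable_fun setT g -> measurable_fun setT (fun p => - g p).
Proof. by move=> mg; apply: measurableT_comp => //; exact: oppr_measurable. Qed.
Lemma mmax : measurable_fun setT (fun p : T => Num.max p.1 p.2).
Proof. exact: (measurable_maxr m1 m2). Qed.
Lemma mmin : measurable_fun setT (fun p : T => Num.min p.1 p.2).
Proof. exact: (measurable_minr m1 m2). Qed.

Definition sig (p : T) : T := (- p.2, - p.1).
Lemma sigK p : sig (sig p) = p.
Proof. by case: p => x y; rewrite /sig /= !opprK. Qed.
Lemma msig : measurable_fun setT sig.
Proof.
apply/measurable_fun_pairP; split.
  have := mopp m2; by congr measurable_fun.
have := mopp m1; by congr measurable_fun.
Qed.
Lemma msigP {B : set T} : measurable B -> measurable (sig @^-1` B).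
Proof. by move=> mB; rewrite -[X in measurable X]setTI; apply: msig. Qed.
Notation leb := (@lebesgue_measure R).


Lemma mneg : measurable_fun setT (-%R : R -> R).
Proof. exact: oppr_measurable. Qed.

Lemma lebN (A : set R) : measurable A -> leb ((-%R) @^-1` A) = leb A :> \bar R.
Proof.
move=> mA; symmetry.
have H := @lebesgue_measure_unique R (@pushforward _ _ (measurableTypeR R) (measurableTypeR R) R leb (-%R)  : {measure set _ -> \bar R}).
apply: H => //.
move=> _ [[a b] _ <-] /=.
rewrite /pushforward.
have -> : (-%R) @^-1` `]a, b]%classic = `[- b, - a[%classic :> set R.
  apply/seteqP; split => x /=; rewrite !in_itv /=.
  by move=> /andP[h1 h2]; apply/andP; split; lra.
  by move=> /andP[h1 h2]; apply/andP; split; lra.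
rewrite !lebesgue_measure_itv /= !lte_fin ltrN2.
by case: ifPn => // _; rewrite opprK addrC.

Qed.

Lemma prodsig (X : set T) : measurable X ->
  (leb \x leb)%E (sig @^-1` X) = (leb \x leb)%E X.
Proof.
move=> mX; symmetry.
have H := product_measure_unique (m1 := leb) (m2 := leb)
  (m' := (@pushforward _ _ (measurableTypeR R * measurableTypeR R)%type (measurableTypeR R * measurableTypeR R)%type R (leb \x leb)%E sig : {measure set _ -> \bar R})).
apply: (H msig) => //.
move=> A B mA mB.
have E : sig @^-1` (A `*` B) = ((-%R) @^-1` B) `*` ((-%R) @^-1` A).
  by apply/seteqP; split => p [h1 h2]; split.
rewrite /pushforward; transitivity ((leb \x leb)%E (((-%R) @^-1` B) `*` ((-%R) @^-1` A))).
  exact: (congr1 _ E).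
rewrite product_measure1E; last 2 first.
- by rewrite -[X in measurable X]setTI; apply: mneg.
- by rewrite -[X in measurable X]setTI; apply: mneg.
rewrite muleC; congr (_ * _)%E; exact: lebN.
Qed.
Definition AU (t : R) : set T := [set p | `|p.1| <= t /\ t < p.2].
Definition AL (t : R) : set T := [set p | `|p.2| <= t /\ t < p.1].
Definition DU : set T := [set p | `|p.1| < p.2].
Definition DL : set T := [set p | `|p.2| < p.1].
Ltac solve_set := apply/seteqP; split => -[x y] /=;
  rewrite /absX /absY /absmax /absmin /sig /AU /AL /= ?maxEle ?minEle; case: ifP => ?;
  rewrite ?normrN ?ler_norml ?ltr_norml; lra.
Lemma s1 t : [set p | absX p <= t] `\` [set p | absmax p <= t] = AU t. Proof. solve_set. Qed.
Lemma s2 t : [set p | absmax p <= t] `\` [set p | absX p <= t] = sig @^-1` AU t. Proof. solve_set. Qed.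
Lemma s3 t : [set p | absmin p <= t] `\` [set p | absY p <= t] = AU t. Proof. solve_set. Qed.
Lemma s4 t : [set p | absY p <= t] `\` [set p | absmin p <= t] = sig @^-1` AU t. Proof. solve_set. Qed.
Lemma s5 t : [set p | absY p <= t] `\` [set p | absmax p <= t] = AL t. Proof. solve_set. Qed.
Lemma s6 t : [set p | absmax p <= t] `\` [set p | absY p <= t] = sig @^-1` AL t. Proof. solve_set. Qed.
Lemma s7 t : [set p | absmin p <= t] `\` [set p | absX p <= t] = AL t. Proof. solve_set. Qed.
Lemma s8 t : [set p | absX p <= t] `\` [set p | absmin p <= t] = sig @^-1` AL t. Proof. solve_set. Qed.
Lemma eU : [set p : T | p.1 < - `|p.2|] = sig @^-1` DU.
Proof. apply/seteqP; split => -[x y] /=; rewrite /DU /sig /= normrN ltrNr; lra. Qed.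
Lemma eL : [set p : T | p.2 < - `|p.1|] = sig @^-1` DL.
Proof. apply/seteqP; split => -[x y] /=; rewrite /DL /sig /= normrN ltrNr; lra. Qed.
Lemma sigsig (S : set T) : sig @^-1` (sig @^-1` S) = S.
Proof. by apply/seteqP; split => p /=; rewrite sigK. Qed.

Lemma mabsX : measurable_fun setT (@absX R). Proof. exact: mabs m1. Qed.
Lemma mabsY : measurable_fun setT (@absY R). Proof. exact: mabs m2. Qed.
Lemma mabsmax : measurable_fun setT (@absmax R). Proof. exact: mabs mmax. Qed.
Lemma mabsmin : measurable_fun setT (@absmin R). Proof. exact: mabs mmin. Qed.
Lemma mAU t : measurable (AU t).
Proof. exact: measurableI (mset_le _ _ (mabs m1) (mcst t)) (mset_lt _ _ (mcst t) m2). Qed.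
Lemma mAL t : measurable (AL t).
Proof. exact: measurableI (mset_le _ _ (mabs m2) (mcst t)) (mset_lt _ _ (mcst t) m1). Qed.
Lemma mDU : measurable DU. Proof. exact: mset_lt _ _ (mabs m1) m2. Qed.
Lemma mDL : measurable DL. Proof. exact: mset_lt _ _ (mabs m2) m1. Qed.
Lemma AUD t : AU t `<=` DU. Proof. by move=> [x y] [h1 h2]; exact: le_lt_trans h1 h2. Qed.
Lemma ALD t : AL t `<=` DL. Proof. by move=> [x y] [h1 h2]; exact: le_lt_trans h1 h2. Qed.
Lemma covU p : DU p -> exists q : rat, AU (ratr q) p.
Proof.
move=> h; have [q] := rat_in_itvoo h; rewrite in_itv /= => /andP[h1 h2].
by exists q; split => //; apply: ltW.
Qed.
Lemma covL p : DL p -> exists q : rat, AL (ratr q) p.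
Proof.
move=> h; have [q] := rat_in_itvoo h; rewrite in_itv /= => /andP[h1 h2].
by exists q; split => //; apply: ltW.
Qed.
Lemma covrev (D : set T) (A : R -> set T) : (forall p, D p -> exists q : rat, A (ratr q) p) ->
  forall p, (sig @^-1` D) p -> exists q : rat, (sig @^-1` A (ratr q)) p.
Proof. by move=> cov p /cov. Qed.
Lemma subrev (D : set T) (A : R -> set T) : (forall t, A t `<=` D) ->
  forall t, sig @^-1` A t `<=` sig @^-1` D.
Proof. by move=> AD t p /AD. Qed.
Section Core.
Variable mu : probability T R.
Definition m (A : set T) : R := fine (mu A).
Lemma muE {A} : measurable A -> mu A = (m A)%:E.
Proof. by move=> mA; rewrite /m fineK // (fin_num_measure mu A mA). Qed.
Lemma mDI {A B} : measurable A -> measurable B -> m A = m (A `\` B) + m (A `&` B).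
Proof.
move=> mA mB; apply: EFin_inj; rewrite EFinD.
rewrite -(muE mA) -(muE (measurableD mA mB)) -(muE (measurableI _ _ mA mB)).
exact: measureDI.
Qed.
Lemma mle {A B} : measurable A -> measurable B -> (mu A <= mu B)%E = (m A <= m B).
Proof. by move=> mA mB; rewrite (muE mA) (muE mB) lee_fin. Qed.
Lemma mlt {A B} : measurable A -> measurable B -> (mu A < mu B)%E = (m A < m B).
Proof. by move=> mA mB; rewrite (muE mA) (muE mB) lte_fin. Qed.
Lemma mU {A B} : measurable A -> measurable B -> m (A `|` B) = m A + m (B `\` A).
Proof.
move=> mA mB; rewrite (mDI (measurableU _ _ mA mB) mA).
have -> : (A `|` B) `\` A = B `\` A by apply/seteqP; split => p /=; tauto.
have -> : (A `|` B) `&` A = A by apply/seteqP; split => p /=; tauto.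
by rewrite addrC.
Qed.

Definition r (k : nat) : R := match (unpickle k : option rat) with Some q => ratr q | None => 0 end.
Fixpoint Uf (A : R -> set T) (n : nat) : set T :=
  match n with 0%N => set0 | n.+1 => Uf A n `|` A (r n) end.

Lemma core (D : set T) (A : R -> set T) :
  measurable D -> (forall t, measurable (A t)) -> (forall t, A t `<=` D) ->
  (forall p, D p -> exists q : rat, A (ratr q) p) ->
  (forall B, measurable B -> B `<=` D -> m (sig @^-1` B) <= m B) ->
  (exists t, m (sig @^-1` A t) < m (A t)) <-> m (sig @^-1` D) < m D.
Proof.
move=> mD mA AD cov K; split.
  move=> [t lt].
  have mDA := measurableD mD (mA t).
  have DA : D `&` A t = A t.
    by apply/seteqP; split => p /=; [case|move=> h; split => //; exact: AD h].
  have sDA : sig @^-1` D `&` sig @^-1` A t = sig @^-1` A t.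
    by apply/seteqP; split => p /=; [case|move=> h; split => //; exact: AD h].
  have e1 := mDI mD (mA t); rewrite DA in e1.
  have e2 := mDI (msigP mD) (msigP (mA t)); rewrite sDA in e2.
  have e3 : sig @^-1` D `\` sig @^-1` A t = sig @^-1` (D `\` A t) by [].
  rewrite e3 in e2.
  have k := K _ mDA (@subDsetl _ _ _).
  rewrite e1 e2; lra.
move=> lt; apply: contrapT => none.
have eqA t : m (sig @^-1` A t) = m (A t).
  apply/eqP; rewrite eq_le K //= leNgt; apply/negP => h; apply: none; by exists t.
have mUf n : measurable (Uf A n).
  by elim: n => [|n IH] /=; [exact: measurable0 | exact: measurableU].
have UD n : Uf A n `<=` D.
  by elim: n => [|n IH] /=; [exact: sub0set | rewrite subUset; split].
have eqU n : m (sig @^-1` Uf A n) = m (Uf A n).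
  elim: n => [|n IH] /=; first by rewrite preimage_set0.
  set X := Uf A n; set Y := A (r n).
  rewrite preimage_setU (mU (mUf n) (mA _)) (mU (msigP (mUf n)) (msigP (mA _))).
  have e1 := mDI (mA (r n)) (mUf n).
  have e2 := mDI (msigP (mA (r n))) (msigP (mUf n)).
  have k1 := K _ (measurableD (mA (r n)) (mUf n)) (subset_trans (@subDsetl _ _ _) (AD _)).
  have k2 := K _ (measurableI _ _ (mA (r n)) (mUf n)) (subset_trans (@subIsetl _ _ _) (AD _)).
  have := eqA (r n).
  rewrite -/X -/Y in e1 e2 k1 k2 *.
  have h1 : sig @^-1` Y `\` sig @^-1` X = sig @^-1` (Y `\` X) by [].
  have h2 : sig @^-1` Y `&` sig @^-1` X = sig @^-1` (Y `&` X) by [].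
  rewrite h1 h2 in e2 *; rewrite IH; lra.
have ndU : nondecreasing_seq (Uf A).
  by apply/nondecreasing_seqP => n; apply/subsetPset => /=; exact: subsetUl.
have cupU : \bigcup_n Uf A n = D.
  apply/seteqP; split => [p [n _ /UD]//| p /cov [q Aq]].
  by exists (pickle q).+1 => //=; right; rewrite /r pickleK.
have c1 := @nondecreasing_cvg_mu _ _ _ mu (Uf A) mUf (ltac:(by rewrite cupU)) ndU.
have ndV : nondecreasing_seq (fun n => sig @^-1` Uf A n).
  apply/nondecreasing_seqP => n; apply/subsetPset; apply: preimage_subset; exact: subsetUl.
have cupV : \bigcup_n (sig @^-1` Uf A n) = sig @^-1` D by rewrite -preimage_bigcup cupU.
have c2 := @nondecreasing_cvg_mu _ _ _ mu (fun n => sig @^-1` Uf A n) (fun n => msigP (mUf n)) (ltac:(by rewrite cupV; exact: msigP)) ndV.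
have eqS : mu \o (fun n => sig @^-1` Uf A n) = mu \o Uf A.
  by apply/funext => n /=; rewrite (muE (msigP (mUf n))) (muE (mUf n)) eqU.
rewrite eqS cupV in c2; rewrite cupU in c1.
have E : mu D = mu (sig @^-1` D).
  apply: (cvg_unique _ c1 c2) => //.
rewrite (muE mD) (muE (msigP mD)) in E; case: E => E2.
lra.
Qed.
Lemma sig_img (B : set T) : sig @` B = sig @^-1` B.
Proof.
apply/seteqP; split => p /=.
  by move=> [q Bq <-]; rewrite sigK.
by move=> Bp; exists (sig p) => //; rewrite sigK.
Qed.

Lemma Kpmf f (D : set T) : is_joint_pmf mu f -> (forall p, D p -> f (sig p) <= f p) ->
  forall B, measurable B -> B `<=` D -> m (sig @^-1` B) <= m B.
Proof.
move=> [f0 hf] fD B mB BD.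
rewrite -(mle (msigP mB) mB) (hf _ (msigP mB)) (hf _ mB) -sig_img esum_image.
  by apply: le_esum => p Bp; rewrite lee_fin; apply: fD; apply: BD.
by move=> x y _ _ e; rewrite -(sigK x) e sigK.
Qed.

Lemma cmp_pt {G H : set T} : measurable G -> measurable H ->
  ((mu H <= mu G)%E <-> m (H `\` G) <= m (G `\` H)) /\
  ((mu H < mu G)%E <-> m (H `\` G) < m (G `\` H)).
Proof.
move=> mG mH; rewrite (mle mH mG) (mlt mH mG) (mDI mH mG) (mDI mG mH) setIC.
split; split => h; lra.
Qed.
Lemma Kpdf f (D : set T) : is_joint_pdf mu f -> (forall p, D p -> f (sig p) <= f p) ->
  forall B, measurable B -> B `<=` D -> m (sig @^-1` B) <= m B.
Proof.
move=> [f0 [mf hf]] fD B mB BD.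
rewrite -(mle (msigP mB) mB) (hf _ (msigP mB)) (hf _ mB).
have mfs : measurable_fun setT (fun p => (f (sig p))%:E).
  by apply/measurable_EFinP; apply: measurableT_comp => //; exact: msig.
have mfE : measurable_fun setT (fun p => (f p)%:E).
  by apply/measurable_EFinP.
have H := @ge0_integral_pushforward _ _ (measurableTypeR R * measurableTypeR R)%type (measurableTypeR R * measurableTypeR R)%type R sig msig (leb \x leb)%E B
  (fun p => (f (sig p))%:E) mB (measurable_funS measurableT (@subsetT _ _) mfs)
  (fun p _ => f0 _).
rewrite (eq_measure_integral (leb \x leb)%E) in H; last first.
  - move=> pf A mA _; exact: (prodsig _ mA).
  - exact: msig.
have H2 : (\int[(leb \x leb)%E]_(x in sig @^-1` B) (f x)%:E =
    \int[(leb \x leb)%E]_(x in B) (f (sig x))%:E)%E.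
  by rewrite H; apply: eq_integral => x _ /=; rewrite sigK.
rewrite H2.
apply: ge0_le_integral => //.
- by move=> x _; rewrite lee_fin.
- exact: (measurable_funS measurableT (@subsetT _ _) mfs).
- exact: (measurable_funS measurableT (@subsetT _ _) mfE).
- by move=> x Bx; rewrite lee_fin; apply: fD; exact: BD.
Qed.
Lemma package (g1 h1 g2 h2 : T -> R) (D E : set T) (A : R -> set T) :
  measurable_fun setT g1 -> measurable_fun setT h1 ->
  measurable_fun setT g2 -> measurable_fun setT h2 ->
  measurable D -> (forall t, measurable (A t)) -> (forall t, A t `<=` D) ->
  (forall p, D p -> exists q : rat, A (ratr q) p) ->
  (forall B, measurable B -> B `<=` D -> m (sig @^-1` B) <= m B) ->
  E = sig @^-1` D ->
  (forall t, [set p | g1 p <= t] `\` [set p | h1 p <= t] = A t) ->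
  (forall t, [set p | h1 p <= t] `\` [set p | g1 p <= t] = sig @^-1` A t) ->
  (forall t, [set p | g2 p <= t] `\` [set p | h2 p <= t] = A t) ->
  (forall t, [set p | h2 p <= t] `\` [set p | g2 p <= t] = sig @^-1` A t) ->
  (st_le mu g1 h1 /\ st_le mu g2 h2) /\
  (st_lt mu g1 h1 <-> (mu E < mu D)%E) /\ (st_lt mu g2 h2 <-> (mu E < mu D)%E).
Proof.
move=> mg1 mh1 mg2 mh2 mD mA AD cov K ->.
have L (g h : T -> R) : measurable_fun setT g -> measurable_fun setT h ->
  (forall t, [set p | g p <= t] `\` [set p | h p <= t] = A t) ->
  (forall t, [set p | h p <= t] `\` [set p | g p <= t] = sig @^-1` A t) ->
  st_le mu g h /\ (st_lt mu g h <-> (mu (sig @^-1` D) < mu D)%E).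
  move=> mg mh e1 e2.
  have mG t : measurable [set p | g p <= t] by apply: mset_le => //; exact: mcst.
  have mH t : measurable [set p | h p <= t] by apply: mset_le => //; exact: mcst.
  have le : st_le mu g h.
    move=> t; rewrite /cdf_of; apply/(cmp_pt (mG t) (mH t)).1.
    by rewrite e1 e2; apply: K.
  split => //; rewrite (mlt (msigP mD) mD) -(core D A mD mA AD cov K); split.
    move=> [_ [t lt]]; exists t; rewrite -e2 -e1.
    by apply/(cmp_pt (mG t) (mH t)).2.
  move=> [t lt]; split => //; exists t; rewrite /cdf_of.
  by apply/(cmp_pt (mG t) (mH t)).2; rewrite e1 e2.
move=> a1 b1 a2 b2.
have [l1 r1] := L _ _ mg1 mh1 a1 b1.
have [l2 r2] := L _ _ mg2 mh2 a2 b2.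
by split.
Qed.
End Core.
End S.

Theorem proposition4p3 (R : realType) (mu : probability (R * R)%type R)
  (f : R * R -> R) :
  is_joint_pmf mu f \/ is_joint_pdf mu f ->
  (* (i) *)
  (UR_E f ->
    (st_le mu (@absX R) (@absmax R) /\ st_le mu (@absmin R) (@absY R)) /\
    (st_lt mu (@absX R) (@absmax R) <->
       (mu [set p | (p.1 < - `|p.2|)%R] < mu [set p | (`|p.1| < p.2)%R])%E) /\
    (st_lt mu (@absmin R) (@absY R) <->
       (mu [set p | (p.1 < - `|p.2|)%R] < mu [set p | (`|p.1| < p.2)%R])%E)) /\
  (* (ii) *)
  (LR_E f ->
    (st_le mu (@absY R) (@absmax R) /\ st_le mu (@absmin R) (@absX R)) /\
    (st_lt mu (@absY R) (@absmax R) <->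
       (mu [set p | (p.2 < - `|p.1|)%R] < mu [set p | (`|p.2| < p.1)%R])%E) /\
    (st_lt mu (@absmin R) (@absX R) <->
       (mu [set p | (p.2 < - `|p.1|)%R] < mu [set p | (`|p.2| < p.1)%R])%E)) /\
  (* (iii) *)
  (UR_E' f ->
    (st_le mu (@absmax R) (@absX R) /\ st_le mu (@absY R) (@absmin R)) /\
    (st_lt mu (@absmax R) (@absX R) <->
       (mu [set p | (`|p.1| < p.2)%R] < mu [set p | (p.1 < - `|p.2|)%R])%E) /\
    (st_lt mu (@absY R) (@absmin R) <->
       (mu [set p | (`|p.1| < p.2)%R] < mu [set p | (p.1 < - `|p.2|)%R])%E)) /\
  (* (iv) *)
  (LR_E' f ->
    (st_le mu (@absmax R) (@absY R) /\ st_le mu (@absX R) (@absmin R)) /\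
    (st_lt mu (@absmax R) (@absY R) <->
       (mu [set p | (`|p.2| < p.1)%R] < mu [set p | (p.2 < - `|p.1|)%R])%E) /\
    (st_lt mu (@absX R) (@absmin R) <->
       (mu [set p | (`|p.2| < p.1)%R] < mu [set p | (p.2 < - `|p.1|)%R])%E)).
Proof.
move=> hf.
have KK (D : set (R * R)) : (forall p, D p -> f (sig p) <= f p) ->
    forall B, measurable B -> B `<=` D -> m mu (sig @^-1` B) <= m mu B.
  by move=> fD; case: hf => h; [exact: Kpmf h fD | exact: Kpdf h fD].
have fU : UR_E f -> forall p, DU p -> f (sig p) <= f p.
  by move=> h [x y] hp; exact: h.
have fL : LR_E f -> forall p, DL p -> f (sig p) <= f p.
  by move=> h [x y] hp; exact: h.
have fU' : UR_E' f -> forall p, (sig @^-1` DU) p -> f (sig p) <= f p.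
  by move=> h [x y] hp; have := h (- y) (- x) hp; rewrite !opprK.
have fL' : LR_E' f -> forall p, (sig @^-1` DL) p -> f (sig p) <= f p.
  by move=> h [x y] hp; have := h (- y) (- x) hp; rewrite !opprK.
have rs1 (t : R) : [set p | absX p <= t] `\` [set p | absmax p <= t] = sig @^-1` (sig @^-1` AU t).
  by rewrite sigsig s1.
have rs3 (t : R) : [set p | absmin p <= t] `\` [set p | absY p <= t] = sig @^-1` (sig @^-1` AU t).
  by rewrite sigsig s3.
have rs5 (t : R) : [set p | absY p <= t] `\` [set p | absmax p <= t] = sig @^-1` (sig @^-1` AL t).
  by rewrite sigsig s5.
have rs7 (t : R) : [set p | absmin p <= t] `\` [set p | absX p <= t] = sig @^-1` (sig @^-1` AL t).
  by rewrite sigsig s7.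
split; [|split; [|split]].
- move=> h; rewrite eU.
  exact: (package mu _ _ _ _ _ _ _ mabsX mabsmax mabsmin mabsY mDU mAU AUD covU (KK _ (fU h)) erefl s1 s2 s3 s4).
- move=> h; rewrite eL.
  exact: (package mu _ _ _ _ _ _ _ mabsY mabsmax mabsmin mabsX mDL mAL ALD covL (KK _ (fL h)) erefl s5 s6 s7 s8).
- move=> h; rewrite eU.
  exact: (package mu _ _ _ _ _ _ _ mabsmax mabsX mabsY mabsmin (msigP mDU) (fun t => msigP (mAU t))
    (subrev _ _ AUD) (covrev _ _ covU) (KK _ (fU' h)) (esym (sigsig DU)) s2 rs1 s4 rs3).
- move=> h; rewrite eL.
  exact: (package mu _ _ _ _ _ _ _ mabsmax mabsY mabsX mabsmin (msigP mDL) (fun t => msigP (mAL t))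
    (subrev _ _ ALD) (covrev _ _ covL) (KK _ (fL' h)) (esym (sigsig DL)) s6 rs5 s8 rs7).
Qed.
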